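(* Let $R$ be a commutative Dedekind domain with field of fractions $Q$, and for each maximal ideal $P$ let $R_P$ be the localization at $P$. Then the torsion submodule of $\prod_P Q/R_P$ (product over all maximal ideals $P$) is $\bigoplus_P Q/R_P$. If moreover $R$ is not semilocal, $|R|=\alpha$, the set of maximal ideals has cardinality $\beta$, and $\alpha<\alpha^\beta$, then $Q\oplus\prod_P Q/R_P\cong\prod_P Q/R_P$ as $R$-modules.
   Context: $Q/R_P\cong E(R/P)$, the injective envelope of $R/P$. *)

(* Defs.v *)
From HB Require Import structures.
From mathcomp Require Import all_boot all_order all_algebra fraction.
From Stdlib Require List.
Set Implicit Arguments. Unset Strict Implicit. Unset Printing Implicit Defensive.
Import GRing.Theory.
Notation "x %:F" := (@FracField.tofrac _ x) : ring_scope.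
Notation tofrac := (@FracField.tofrac _).

Local Open Scope ring_scope.

Section Dedekind.
Variable R : idomainType.

Definition is_ideal (S : {pred R}) : Prop :=
  0 \in S /\ forall a u v, u \in S -> v \in S -> a * u + v \in S.

Definition fin_gen_ideal (S : {pred R}) : Prop :=
  exists s : seq R, forall x, x \in S <->
    exists c : seq R, size c = size s /\ x = \sum_(i < size s) c`_i * s`_i.

Definition noetherian_ring : Prop :=
  forall S : {pred R}, is_ideal S -> fin_gen_ideal S.

Definition prime_ideal (P : {pred R}) : Prop :=
  [/\ is_ideal P, 1 \notin P & forall u v, u * v \in P -> u \in P \/ v \in P].

Definition maximal_ideal (P : {pred R}) : Prop :=
  [/\ is_ideal P, 1 \notin P &
      forall J : {pred R}, is_ideal J -> {subset P <= J} -> 1 \notin J ->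
        {subset J <= P}].

Definition integrally_closed : Prop :=
  forall q : {fraction R},
    (exists p : {poly R}, p \is monic /\ root (map_poly tofrac p) q) ->
    exists a : R, q = a%:F.

Definition dedekind_domain : Prop :=
  [/\ noetherian_ring, integrally_closed &
      forall P : {pred R}, prime_ideal P -> (exists2 x, x \in P & x != 0) ->
        maximal_ideal P].

Record maxideal := MaxIdeal { mi_pred :> {pred R}; mi_max : maximal_ideal mi_pred }.

Definition in_loc (P : maxideal) (q : {fraction R}) : Prop :=
  exists a s : R, s \notin (P : {pred R}) /\ q = a%:F / s%:F.

(* The module prod_P Q/R_P: representatives are families f : maxideal -> Q,
   two representatives being equal in the product iff they agree in every
   coordinate Q/R_P. *)
Definition prodQ := maxideal -> {fraction R}.

Definition prod_eq (f g : prodQ) : Prop := forall P, in_loc P (f P - g P).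

Definition prod_add (f g : prodQ) : prodQ := fun P => f P + g P.
Definition prod_scale (r : R) (f : prodQ) : prodQ := fun P => r%:F * f P.

Definition prod_torsion (f : prodQ) : Prop :=
  exists2 r : R, r != 0 & prod_eq (prod_scale r f) (fun _ => 0).

Definition prod_in_dsum (f : prodQ) : Prop :=
  exists l : list maxideal, forall P, ~ in_loc P (f P) -> List.In P l.

Definition semilocal : Prop := exists l : list maxideal, forall P, List.In P l.

Definition sumQ := ({fraction R} * prodQ)%type.
Definition sum_eq (x y : sumQ) : Prop := x.1 = y.1 /\ prod_eq x.2 y.2.
Definition sum_add (x y : sumQ) : sumQ := (x.1 + y.1, prod_add x.2 y.2).
Definition sum_scale (r : R) (x : sumQ) : sumQ := (r%:F * x.1, prod_scale r x.2).

Definition sum_prod_iso (phi : sumQ -> prodQ) : Prop :=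
  [/\ forall x y, sum_eq x y -> prod_eq (phi x) (phi y),
      forall x y, prod_eq (phi (sum_add x y)) (prod_add (phi x) (phi y)),
      forall r x, prod_eq (phi (sum_scale r x)) (prod_scale r (phi x)),
      forall x y, prod_eq (phi x) (phi y) -> sum_eq x y &
      forall g, exists x, prod_eq (phi x) g].

End Dedekind.

Definition card_lt (A B : Type) : Prop :=
  (exists f : A -> B, injective f) /\ ~ (exists g : B -> A, injective g).

(* Main.v *)
Require Import Defs.
From HB Require Import structures.
From mathcomp Require Import all_boot all_order all_algebra fraction.
From Stdlib Require List.
From mathcomp Require Import generic_quotient.
From mathcomp Require Import boolp classical_sets.
From mathcomp Require Import ring zify.
Set Implicit Arguments. Unset Strict Implicit. Unset Printing Implicit Defensive.
Import GRing.Theory.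
Local Open Scope ring_scope.
Local Open Scope quotient_scope.

Lemma ideal_sum (R : idomainType) (S : {pred R}) n (c s : seq R) :
  is_ideal S -> (forall i, (i < n)%N -> s`_i \in S) ->
  \sum_(i < n) c`_i * s`_i \in S.
Proof.
move=> [S0 Sc] hs.
apply: (big_ind (fun x => x \in S)) => //.
  by move=> x y hx hy; rewrite -[x]mul1r; apply: Sc.
move=> i _; rewrite -[_ * _]addr0; apply: Sc => //; exact: hs.
Qed.

Fixpoint pc (R : idomainType) (L : list {pred R}) (K : R -> Prop) : Prop :=
  match L with
  | nil => K 1
  | Q :: L' => forall x, x \in Q -> pc L' (fun y => K (x * y))
  end.

Lemma pc_mono (R : idomainType) (L : list {pred R}) (K K' : R -> Prop) :
  (forall y, K y -> K' y) -> pc L K -> pc L K'.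
Proof.
elim: L K K' => [|Q L IH] K K' hK /=; first exact: hK.
move=> h x hx; apply: (IH (fun y => K (x * y))) => //; last exact: h.
by move=> y; apply: hK.
Qed.

Lemma pc_app (R : idomainType) (L1 L2 : list {pred R}) (K1 K2 K : R -> Prop) :
  pc L1 K1 -> pc L2 K2 -> (forall y z, K1 y -> K2 z -> K (y * z)) ->
  pc (L1 ++ L2) K.
Proof.
elim: L1 K1 K => [|Q L IH] K1 K /=.
  by move=> h1 h2 hK; apply: pc_mono h2 => z hz; rewrite -[z]mul1r; apply: hK.
move=> h1 h2 hK x hx; apply: (IH (fun y => K1 (x * y))) => //; first exact: h1.
by move=> y z hy hz; rewrite mulrA; apply: hK.
Qed.

Lemma pc_prime (R : idomainType) (L : list {pred R}) (K : R -> Prop) (P : {pred R}) :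
  prime_ideal P -> pc L K ->
  (forall Q, List.In Q L -> exists2 x, x \in Q & x \notin P) ->
  exists2 y, K y & y \notin P.
Proof.
move=> [_ P1 Pp]; elim: L K => [|Q L IH] K /=; first by move=> h _; exists 1.
move=> h hQ; have [x xQ xP] := hQ Q (or_introl erefl).
have [y hy yP] := IH _ (h x xQ) (fun Q' hQ' => hQ Q' (or_intror hQ')).
exists (x * y) => //; apply/negP => /Pp [] hh; [move: xP | move: yP]; by rewrite hh.
Qed.

Definition good (R : idomainType) (I : {pred R}) :=
  exists L : list {pred R},
    (forall Q, List.In Q L -> prime_ideal Q /\ {subset I <= Q}) /\
    pc L (fun y => y \in I).

Definition addid (R : idomainType) (I : {pred R}) (u : R) : {pred R} :=
  fun x => `[< exists a b, b \in I /\ x = a * u + b >].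

Lemma addid_ideal (R : idomainType) (I : {pred R}) u :
  is_ideal I -> is_ideal (addid I u).
Proof.
move=> [I0 Ic]; split.
  by apply/asboolP; exists 0, 0; split => //; rewrite mul0r addr0.
move=> a x y /asboolP [a1 [b1 [hb1 ->]]] /asboolP [a2 [b2 [hb2 ->]]].
apply/asboolP; exists (a * a1 + a2), (a * b1 + b2); split; first exact: Ic.
ring.
Qed.

Lemma addid_sub (R : idomainType) (I : {pred R}) u : {subset I <= addid I u}.
Proof. by move=> x hx; apply/asboolP; exists 0, x; split => //; rewrite mul0r add0r. Qed.

Lemma addid_u (R : idomainType) (I : {pred R}) u : is_ideal I -> u \in addid I u.
Proof. by move=> [I0 _]; apply/asboolP; exists 1, 0; split => //; rewrite mul1r addr0. Qed.

Lemma bad_step (R : idomainType) (I : {pred R}) : is_ideal I -> ~ good I ->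
  exists J : {pred R}, [/\ is_ideal J, ~ good J, {subset I <= J} &
     exists2 x, x \in J & x \notin I].
Proof.
move=> hI bad.
have I1 : 1 \notin I.
  apply/negP => h; apply: bad; exists nil; split => //.
have [u [v [uv uI vI]]] : exists u v, [/\ u * v \in I, u \notin I & v \notin I].
  apply: contrapT => hn; apply: bad; exists [:: I]; split.
    move=> Q [<-|//]; split => //; split => // a b ab.
    apply: contrapT => hab; apply: hn; exists a, b; split => //.
      by apply/negP => ha; apply: hab; left.
    by apply/negP => hb; apply: hab; right.
  by move=> x hx /=; rewrite mulr1.
have [hIu|hIu] := pselect (good (addid I u)); last first.
  exists (addid I u); split => //; first exact: addid_ideal.
    exact: addid_sub.
  by exists u => //; apply: addid_u.
have [hIv|hIv] := pselect (good (addid I v)); last first.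
  exists (addid I v); split => //; first exact: addid_ideal.
    exact: addid_sub.
  by exists v => //; apply: addid_u.
exfalso; apply: bad.
case: hIu => L1 [hL1 pc1]; case: hIv => L2 [hL2 pc2].
exists (L1 ++ L2); split.
  move=> Q hQ; case: (List.in_app_or _ _ _ hQ).
    move=> /hL1 [pQ sQ]; split => // x hx; apply: sQ; exact: addid_sub.
  move=> /hL2 [pQ sQ]; split => // x hx; apply: sQ; exact: addid_sub.
apply: (pc_app pc1 pc2) => y z /asboolP [a1 [b1 [hb1 ->]]] /asboolP [a2 [b2 [hb2 ->]]].
case: hI => I0 Ic.
have -> : (a1 * u + b1) * (a2 * v + b2) = (a1 * a2) * (u * v) + (a1 * u * b2 + b1 * (a2 * v + b2)) by ring.
apply: (Ic _ _ _ uv); apply: (Ic _ _ _ hb2).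
rewrite -[_ * (_ + _)]addr0 mulrC; exact: Ic.
Qed.

Lemma all_good (R : idomainType) : noetherian_ring R ->
  forall I : {pred R}, is_ideal I -> good I.
Proof.
move=> hN I0 hI0; apply: contrapT => bad0.
pose next (I : {pred R}) : {pred R} :=
  match pselect (is_ideal I /\ ~ good I) with
  | left h => proj1_sig (cid (bad_step h.1 h.2))
  | right _ => I end.
have nextP : forall I, is_ideal I -> ~ good I ->
   [/\ is_ideal (next I), ~ good (next I), {subset I <= next I} &
     exists2 x, x \in next I & x \notin I].
  move=> I h1 h2; rewrite /next; case: pselect => [h|[]]; last by split.
  by case: cid.
pose c n := iter n next I0.
have hc : forall n, is_ideal (c n) /\ ~ good (c n).
  elim=> [|n [h1 h2]] //; have [] := nextP _ h1 h2; by split.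
have mono : forall m k, {subset c m <= c (m + k)%N}.
  move=> m; elim=> [|k IH]; first by rewrite addn0.
  move=> x /IH hx; rewrite addnS; have [h1 h2] := hc (m + k)%N.
  by have [_ _ hs _] := nextP _ h1 h2; apply: hs.
pose U : {pred R} := fun x => `[< exists n, x \in c n >].
have hU : is_ideal U.
  split; first by apply/asboolP; exists 0%N; case: hI0.
  move=> a u v /asboolP [n hn] /asboolP [m hm]; apply/asboolP; exists (n + m)%N.
  have [[_ Ic] _] := hc (n + m)%N; apply: Ic; first exact: mono.
  rewrite addnC; exact: mono.
have [s hs] := hN U hU.
have sU : forall i, (i < size s)%N -> s`_i \in U.
  move=> i hi; apply/hs; exists [seq (j == i)%:R | j <- iota 0 (size s)].
  split; first by rewrite size_map size_iota.
  rewrite (bigD1 (Ordinal hi)) //= (nth_map 0%N) ?size_iota // nth_iota // add0n eqxx mul1r.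
  rewrite big1 ?addr0 // => j hj; rewrite (nth_map 0%N) ?size_iota // nth_iota // add0n.
  have -> : (j == i :> nat) = false by apply/negbTE; move: hj; apply: contra => /eqP h; apply/eqP/val_inj.
  by rewrite mul0r.
have [N hNs] : exists N, forall i, (i < size s)%N -> s`_i \in c N.
  elim: (size s) sU => [|n IH] hsU; first by exists 0%N.
  have [N1 h1] := IH (fun i hi => hsU i (ltnW hi)).
  have /asboolP [N2 h2] := hsU n (ltnSn n).
  exists (N1 + N2)%N => i; rewrite ltnS leq_eqVlt => /orP [/eqP ->|hi].
    by rewrite addnC; apply: mono.
  by apply: mono; apply: h1.
have UN : {subset U <= c N}.
  move=> x /hs [cc [_ ->]]; apply: ideal_sum; first by case: (hc N).
  exact: hNs.
have [h1 h2] := hc N; have [_ _ _ [x hx1 hx2]] := nextP _ h1 h2.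
by move: hx2; rewrite UN //; apply/asboolP; exists N.+1.
Qed.

Lemma max_prime (R : idomainType) (P : {pred R}) : maximal_ideal P -> prime_ideal P.
Proof.
move=> [hI P1 hmax]; split => // u v uv.
have [uP|uP] := pselect (u \in P); first by left.
right; have [hJ|hJ] := boolP (1 \in addid P u); last first.
  by case: uP; apply: (hmax _ (addid_ideal u hI) (@addid_sub _ P u) hJ); apply: addid_u.
move: hJ => /asboolP [a [b [hb e]]].
case: hI => P0 Pc.
have -> : v = a * (u * v) + v * b by rewrite mulrA [v * b]mulrC -mulrDl -e mul1r.
apply: (Pc _ _ _ uv); rewrite -[_ * b]addr0; exact: Pc.
Qed.

Lemma maxideal_eq (R : idomainType) (P : maxideal R) (Q : {pred R}) (hQ : maximal_ideal Q) :
  (forall x, (x \in (P : {pred R})) = (x \in Q)) -> P = MaxIdeal hQ.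
Proof.
case: P => p hp /= h.
have e : p = Q by apply/funext => x; exact: (h x).
subst; congr MaxIdeal; exact: Prop_irrelevance.
Qed.

Lemma mk_list (R : idomainType) (L : list {pred R}) :
  (forall Q, List.In Q L -> maximal_ideal Q) ->
  exists l : list (maxideal R), forall P : maxideal R,
    (exists Q, List.In Q L /\ forall x, (x \in (P : {pred R})) = (x \in Q)) -> List.In P l.
Proof.
elim: L => [|Q L IH] hL; first by exists nil => P [Q []].
have [l hl] := IH (fun Q' h => hL Q' (or_intror h)).
have hQ := hL Q (or_introl erefl).
exists (MaxIdeal hQ :: l) => P [Q' [[<-|hQ'] e]].
  by left; apply/esym/maxideal_eq.
by right; apply: hl; exists Q'.
Qed.

Lemma finmax (R : idomainType) : dedekind_domain R -> forall r : R, r != 0 ->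
  exists l : list (maxideal R), forall P : maxideal R,
    r \in (P : {pred R}) -> List.In P l.
Proof.
move=> [hN _ hpm] r r0.
pose Ir : {pred R} := fun x => `[< exists a, x = a * r >].
have hIr : is_ideal Ir.
  split; first by apply/asboolP; exists 0; rewrite mul0r.
  move=> a u v /asboolP [b ->] /asboolP [c ->]; apply/asboolP; exists (a * b + c); ring.
have rIr : r \in Ir by apply/asboolP; exists 1; rewrite mul1r.
have [L [hL pcL]] := all_good hN hIr.
have [l hl] := mk_list (L := L) (fun Q h => hpm Q (hL Q h).1 (ex_intro2 _ _ r ((hL Q h).2 r rIr) r0)).
exists l => P rP; apply: hl.
have [Q [QL QP]] : exists Q, List.In Q L /\ {subset Q <= (P : {pred R})}.
  apply: contrapT => hn.
  have [y /asboolP [a ->]] := pc_prime (max_prime (mi_max P)) pcL (fun Q hQ =>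
    ltac:(apply: contrapT => hh; apply: hn; exists Q; split => // x xQ;
          apply: contrapT => xP; apply: hh; exists x => //; exact/negP)).
  case: (mi_max P) => [[P0 Pc] _ _]; rewrite -[_ * r]addr0; move/negP; apply; exact: Pc.
exists Q; split => // x; apply/idP/idP; last exact: QP.
have [_ _ hmax] := hpm Q (hL Q QL).1 (ex_intro2 _ _ r ((hL Q QL).2 r rIr) r0).
have [hP P1 _] := mi_max P.
exact: (hmax _ hP QP P1).
Qed.
Lemma frac_repr (R : idomainType) (q : {fraction R}) :
  exists a b : R, b != 0 /\ q = a%:F / b%:F.
Proof.
elim/quotW: q => x.
exists x.1, x.2; split; first exact: denom_ratioP.
have : (x.2)%:F * \pi_{fraction R} x = (x.1)%:F.
  unlock FracField.tofrac.
  rewrite -[_ * _]FracField.pi_mul.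
  apply/eqmodP => /=; rewrite /FracField.equivf /FracField.mulf /=.
  rewrite !numden_Ratio ?oner_neq0 ?mulr1 ?mul1r ?denom_ratioP //.
move=> <-; rewrite mulrAC divff ?mul1r //.
rewrite tofrac_eq0; exact: denom_ratioP.
Qed.

Lemma fl_add (F : fieldType) (x1 x2 y1 y2 : F) : (y1 != 0) -> (y2 != 0) ->
  x1 / y1 + x2 / y2 = (x1 * y2 + x2 * y1) / (y1 * y2).
Proof. by move=> h1 h2; field; rewrite h1 h2. Qed.

Lemma fl_canc (F : fieldType) (r b a : F) : b != 0 -> r * b * (a / b) = r * a.
Proof. by move=> h; field; rewrite h. Qed.

Lemma fl_div (F : fieldType) (r x : F) : r != 0 -> x = (r * x) / r.
Proof. by move=> h; field; rewrite h. Qed.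

Lemma fl_div2 (F : fieldType) (a s r : F) : s != 0 -> r != 0 -> a / s / r = a / (s * r).
Proof. by move=> h1 h2; field; rewrite h1 h2. Qed.

Lemma P0 (R : idomainType) (P : maxideal R) : 0 \in (P : {pred R}).
Proof. by case: (mi_max P) => [[]]. Qed.

Lemma P1 (R : idomainType) (P : maxideal R) : 1 \notin (P : {pred R}).
Proof. by case: (mi_max P). Qed.

Lemma Pmul (R : idomainType) (P : maxideal R) s t :
  s \notin (P : {pred R}) -> t \notin (P : {pred R}) -> s * t \notin (P : {pred R}).
Proof.
move=> hs ht; case: (max_prime (mi_max P)) => _ _ Pp.
apply/negP => /Pp [] h; [move: hs | move: ht]; by rewrite h.
Qed.

Lemma PnF (R : idomainType) (P : maxideal R) s :
  s \notin (P : {pred R}) -> s%:F != 0.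
Proof.
move=> hs; rewrite tofrac_eq0; apply/negP => /eqP e; move: hs; rewrite e.
by rewrite P0.
Qed.

Lemma loc_R (R : idomainType) (P : maxideal R) a : in_loc P a%:F.
Proof. by exists a, 1; split; [exact: P1 | rewrite tofrac1 divr1]. Qed.

Lemma loc_add (R : idomainType) (P : maxideal R) q1 q2 :
  in_loc P q1 -> in_loc P q2 -> in_loc P (q1 + q2).
Proof.
move=> [a1 [s1 [h1 ->]]] [a2 [s2 [h2 ->]]].
exists (a1 * s2 + a2 * s1), (s1 * s2); split; first exact: Pmul.
have n1 := PnF h1; have n2 := PnF h2.
by rewrite tofracD !tofracM fl_add.
Qed.

Lemma loc_mulR (R : idomainType) (P : maxideal R) x q :
  in_loc P q -> in_loc P (x%:F * q).
Proof.
move=> [a [s [h ->]]]; exists (x * a), s; split => //.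
by rewrite tofracM mulrA.
Qed.

Lemma loc_opp (R : idomainType) (P : maxideal R) q :
  in_loc P q -> in_loc P (- q).
Proof.
move=> h; have := loc_mulR (-1) h; by rewrite tofracN tofrac1 mulN1r.
Qed.

Lemma loc_sub (R : idomainType) (P : maxideal R) q1 q2 :
  in_loc P q1 -> in_loc P q2 -> in_loc P (q1 - q2).
Proof. by move=> h1 h2; apply: loc_add => //; apply: loc_opp. Qed.

Lemma loc_eq (R : idomainType) (P : maxideal R) q1 q2 :
  q1 = q2 -> in_loc P q1 -> in_loc P q2.
Proof. by move=> ->. Qed.

Lemma loc_0 (R : idomainType) (P : maxideal R) : in_loc P 0.
Proof. by rewrite -tofrac0; apply: loc_R. Qed.

Lemma denoms (R : idomainType) (f : prodQ R) (l : list (maxideal R)) :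
  exists2 r : R, r != 0 & forall P, List.In P l -> in_loc P (r%:F * f P).
Proof.
elim: l => [|P l [r r0 hr]]; first by exists 1 => //; rewrite oner_neq0.
have [a [b [b0 e]]] := frac_repr (f P).
exists (r * b); first by rewrite mulf_neq0.
move=> Q [<-|hQ].
  rewrite e; apply: (loc_eq (q1 := (r * a)%:F)); last exact: loc_R.
  have bF : b%:F != 0 by rewrite tofrac_eq0.
  by rewrite !tofracM fl_canc.
by rewrite tofracM [_ * b%:F]mulrC -mulrA; apply: loc_mulR; apply: hr.
Qed.

Lemma part1 (R : idomainType) (hR : dedekind_domain R) (f : prodQ R) :
  prod_torsion f <-> prod_in_dsum f.
Proof.
split.
  move=> [r r0 h]; have [l hl] := finmax hR r0; exists l => P hP; apply: hl.
  apply: contrapT => /negP rP; apply: hP.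
  have [a [s [hs e]]] := h P; rewrite /prod_scale subr0 in e.
  exists a, (s * r); split; first exact: Pmul.
  have rF : r%:F != 0 by rewrite tofrac_eq0.
  have sF := PnF hs.
  by rewrite (fl_div (f P) rF) e tofracM fl_div2.
move=> [l hl]; have [r r0 hr] := denoms f l; exists r => // P.
rewrite /prod_scale subr0.
have [/hr //|nP] := pselect (List.In P l).
apply: loc_mulR; apply: contrapT => h; exact: nP (hl P h).
Qed.


Definition ev (R : idomainType) (g : nat -> prodQ R) (c : seq {fraction R}) : prodQ R :=
  fun P => \sum_(i < size c) c`_i * g i P.

Definition indep (R : idomainType) (g : nat -> prodQ R) :=
  forall c, prod_eq (ev g c) (fun _ => 0) -> forall i, c`_i = 0.

Lemma ev_big (R : idomainType) (g : nat -> prodQ R) c n P :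
  (size c <= n)%N -> ev g c P = \sum_(i < n) c`_i * g i P.
Proof.
move=> h; rewrite /ev -!(big_mkord xpredT (fun i => c`_i * g i P)).
rewrite [RHS](@big_cat_nat _ _ _ (size c)) //= [X in _ + X]big1_seq ?addr0 //.
move=> i /andP [_]; rewrite mem_index_iota => /andP [hi _]; by rewrite nth_default ?mul0r.
Qed.

Lemma ev_lin (R : idomainType) (g : nat -> prodQ R) (a b d : seq {fraction R}) k P :
  (forall i, d`_i = k * a`_i + b`_i) -> ev g d P = k * ev g a P + ev g b P.
Proof.
move=> h; set n := maxn (size a) (maxn (size b) (size d)).
rewrite !(@ev_big _ _ _ n) /n; try lia.
rewrite mulr_sumr -big_split /=; apply: eq_bigr => i _; rewrite h; ring.
Qed.

Lemma ev_nil (R : idomainType) (g : nat -> prodQ R) P : ev g [::] P = 0.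
Proof. by rewrite /ev big_ord0. Qed.

Lemma ev_ext (R : idomainType) (g : nat -> prodQ R) (a b : seq {fraction R}) P :
  (forall i, a`_i = b`_i) -> ev g a P = ev g b P.
Proof.
move=> h; rewrite (@ev_lin _ _ [::] b a 0) ?ev_nil ?mul0r ?add0r //.
by move=> i; rewrite h mul0r add0r.
Qed.

Lemma pe_pt (R : idomainType) (f h : prodQ R) : (forall P, f P = h P) -> prod_eq f h.
Proof. by move=> e P; rewrite e subrr; apply: loc_0. Qed.

Lemma pe_refl (R : idomainType) (f : prodQ R) : prod_eq f f.
Proof. exact: pe_pt. Qed.

Lemma pe_sym (R : idomainType) (f h : prodQ R) : prod_eq f h -> prod_eq h f.
Proof. by move=> e P; rewrite -opprB; apply: loc_opp. Qed.

Lemma pe_trans (R : idomainType) (f h k : prodQ R) :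
  prod_eq f h -> prod_eq h k -> prod_eq f k.
Proof.
move=> e1 e2 P; have := loc_add (e1 P) (e2 P).
by apply: loc_eq; rewrite addrA subrK.
Qed.

Lemma pe_lin (R : idomainType) (a : R) (f1 h1 f2 h2 : prodQ R) :
  prod_eq f1 h1 -> prod_eq f2 h2 ->
  prod_eq (fun P => a%:F * f1 P + f2 P) (fun P => a%:F * h1 P + h2 P).
Proof.
move=> e1 e2 P; have := loc_add (loc_mulR a (e1 P)) (e2 P).
by apply: loc_eq; ring.
Qed.

Definition adm (R : idomainType) (g : nat -> prodQ R) (W : prodQ R -> Prop) :=
  [/\ W (fun _ => 0), (forall f h, prod_eq f h -> W f -> W h),
      (forall (a : R) f h, W f -> W h -> W (fun P => a%:F * f P + h P)) &
      (forall c, W (ev g c) -> forall i, c`_i = 0)].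

Definition sub (R : idomainType) (W1 W2 : prodQ R -> Prop) := forall f, W1 f -> W2 f.

Definition supF (R : idomainType) (F : (prodQ R -> Prop) -> Prop) : prodQ R -> Prop :=
  fun f => prod_eq f (fun _ => 0) \/ exists W, F W /\ W f.

Lemma sup_adm (R : idomainType) (g : nat -> prodQ R) (F : (prodQ R -> Prop) -> Prop) :
  indep g -> (forall W, F W -> adm g W) ->
  (forall W1 W2, F W1 -> F W2 -> sub W1 W2 \/ sub W2 W1) -> adm g (supF F).
Proof.
move=> hind hF htot; split.
- by left; apply: pe_refl.
- move=> f h e [e0|[t [At tf]]]; first by left; apply: pe_trans (pe_sym e) e0.
  right; exists t; split => //; case: (hF t At) => _ sat _ _; exact: sat tf.
- move=> a f h [f0|[t1 [At1 tf]]] [h0|[t2 [At2 th]]].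
  + left; apply: pe_trans (pe_lin a f0 h0) _.
    by apply: pe_pt => P; rewrite mulr0 addr0.
  + right; exists t2; split => //; case: (hF t2 At2) => _ sat _ _.
    apply: sat th; apply: pe_sym; apply: pe_trans (pe_lin a f0 (pe_refl h)) _.
    by apply: pe_pt => P; rewrite mulr0 add0r.
  + right; exists t1; split => //; case: (hF t1 At1) => W0 sat cl _.
    apply: sat (cl a _ _ tf W0).
    apply: pe_lin; [exact: pe_refl | exact: pe_sym].
  + have [s12|s21] := htot _ _ At1 At2.
      right; exists t2; split => //; case: (hF t2 At2) => _ _ cl _.
      by apply: cl => //; apply: s12.
    right; exists t1; split => //; case: (hF t1 At1) => _ _ cl _.
    by apply: cl => //; apply: s21.
- move=> c [c0|[t [At tc]]]; first exact: hind.
  by case: (hF t At) => _ _ _; apply.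
Qed.

Inductive tower (R : idomainType) (nxt : (prodQ R -> Prop) -> (prodQ R -> Prop)) :
   (prodQ R -> Prop) -> Prop :=
  | t_next W : tower nxt W -> tower nxt (nxt W)
  | t_sup (F : (prodQ R -> Prop) -> Prop) :
      (forall W, F W -> tower nxt W) -> tower nxt (supF F).

Lemma sub_ext (R : idomainType) (W1 W2 : prodQ R -> Prop) : sub W1 W2 -> sub W2 W1 -> W1 = W2.
Proof. move=> h1 h2; apply/funext => f; apply/propext; split; [exact: h1|exact: h2]. Qed.

Lemma subT (R : idomainType) (W1 W2 W3 : prodQ R -> Prop) : sub W1 W2 -> sub W2 W3 -> sub W1 W3.
Proof. by move=> h1 h2 f /h1 /h2. Qed.

Lemma supU (R : idomainType) (F : (prodQ R -> Prop) -> Prop) W : F W -> sub W (supF F).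
Proof. by move=> FW f Wf; right; exists W. Qed.

Lemma supL (R : idomainType) (F : (prodQ R -> Prop) -> Prop) X :
    (forall W, F W -> sub W X) -> sub (fun f => prod_eq f (fun _ => 0)) X ->
    sub (supF F) X.
Proof. by move=> h0 h1 f [/h1 //|[W [FW Wf]]]; apply: h0 FW _ Wf. Qed.

Lemma towerZ (R : idomainType) nxt (infl : forall W, sub W (nxt W)) W :
  @tower R nxt W -> sub (fun f => prod_eq f (fun _ => 0)) W.
Proof.
elim=> [V _ IH|F _ _]; first exact: subT IH (infl V).
by move=> f hf; left.
Qed.

Definition Ext (R : idomainType) nxt (c : prodQ R -> Prop) :=
  forall x, tower nxt x -> sub x c -> sub c x \/ sub (nxt x) c.

Lemma towerA (R : idomainType) nxt (infl : forall W, sub W (nxt W)) c :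
  @tower R nxt c -> Ext nxt c -> forall x, tower nxt x -> sub x c \/ sub (nxt c) x.
Proof.
move=> Tc Ec x; elim=> [y Ty IH|F hF IH].
  case: IH => [yc|cy]; last by right; apply: subT cy (infl y).
  case: (Ec y Ty yc) => [cy|nyc]; last by left.
  by right; rewrite (sub_ext yc cy).
have [[W [FW cW]]|hn] := pselect (exists W, F W /\ sub (nxt c) W).
  by right; apply: subT cW (supU FW).
left; apply: supL; last exact: towerZ Tc.
move=> W FW; case: (IH W FW) => // cW; case: hn; by exists W.
Qed.

Lemma towerB (R : idomainType) nxt (infl : forall W, sub W (nxt W)) c :
  @tower R nxt c -> Ext nxt c.
Proof.
elim=> [y Ty IHy|F hF IH] x Tx.
  move=> xny; case: (towerA infl Ty IHy Tx) => [xy|nyx]; last by left.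
  case: (IHy x Tx xy) => [yx|nxy]; last by right; apply: subT nxy (infl y).
  by right; rewrite (sub_ext xy yx).
move=> xs.
have [hall|] := pselect (forall W, F W -> sub (nxt W) x).
  left; apply: supL; last exact: towerZ Tx.
  by move=> W FW; apply: subT (infl W) (hall W FW).
move=> /existsNP [W /not_implyP [FW nWx]].
case: (towerA infl (hF W FW) (IH W FW) Tx) => [xW|//].
case: (IH W FW x Tx xW) => [Wx|nxW]; last by right; apply: subT nxW (supU FW).
have e := sub_ext xW Wx; subst x.
have [[W' [FW' nW']]|hn] := pselect (exists W', F W' /\ sub (nxt W) W').
  by right; apply: subT nW' (supU FW').
left; apply: supL; last exact: towerZ Tx.
move=> W' FW'; case: (towerA infl (hF W FW) (IH W FW) (hF W' FW')) => // h.
case: hn; by exists W'.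
Qed.

Lemma tower_chain (R : idomainType) nxt (infl : forall W, sub W (nxt W)) x c :
  @tower R nxt x -> tower nxt c -> sub x c \/ sub c x.
Proof.
move=> Tx Tc; case: (towerA infl Tc (towerB infl Tc) Tx) => [|h]; first by left.
by right; apply: subT (infl c) h.
Qed.

Lemma zorn_max (R : idomainType) (g : nat -> prodQ R) : indep g ->
  exists W, adm g W /\ forall W', adm g W' -> sub W W' -> sub W' W.
Proof.
move=> hind.
pose nxt (W : prodQ R -> Prop) : prodQ R -> Prop :=
  match pselect (exists W', adm g W' /\ sub W W' /\ exists f, W' f /\ ~ W f) with
  | left h => proj1_sig (cid h)
  | right _ => W end.
have nxtP : forall W, sub W (nxt W) /\ (adm g W -> adm g (nxt W)).
  move=> W; rewrite /nxt; case: pselect => [h|_]; last by split => // f.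
  by case: (cid h) => W' /= [h1 [h2 _]].
have nxtS : forall W, (exists W', adm g W' /\ sub W W' /\ exists f, W' f /\ ~ W f) ->
   exists f, nxt W f /\ ~ W f.
  move=> W h; rewrite /nxt; case: pselect => [h'|//].
  by case: (cid h') => W' /= [h1 [h2 h3]].
have infl : forall W, sub W (nxt W) by move=> W; case: (nxtP W).
have Tadm : forall W, tower nxt W -> adm g W.
  move=> W; elim=> [V _ IH|F hF IH]; first by apply: (nxtP V).2.
  apply: (sup_adm hind IH) => W1 W2 h1 h2; exact: (@tower_chain R nxt infl W1 W2 (hF _ h1) (hF _ h2)).
pose U := supF (tower nxt).
have TU : tower nxt U by apply: t_sup.
exists U; split; first exact: Tadm.
move=> W' aW' sU; apply: contrapT => hn.
have [f [nf nUf]] : exists f, nxt U f /\ ~ U f.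
  apply: nxtS; exists W'; split => //; split => //.
  by move: hn => /existsNP [f /not_implyP [h1 h2]]; exists f.
by apply: nUf; apply: supU (t_next TU) _ nf.
Qed.


Lemma exists_seq (T : nmodType) (F : nat -> T) n :
  (forall i, (n <= i)%N -> F i = 0) -> exists d : seq T, forall i, d`_i = F i.
Proof.
move=> h; exists (mkseq F n) => i; case: (ltnP i n) => hi.
  by rewrite nth_mkseq.
by rewrite nth_default ?size_mkseq // h.
Qed.

Lemma ev_sub (R : idomainType) (g : nat -> prodQ R) (a b d : seq {fraction R}) P :
  (forall i, d`_i = a`_i - b`_i) -> ev g d P = ev g a P - ev g b P.
Proof.
move=> h; set n := maxn (size a) (maxn (size b) (size d)).
rewrite !(@ev_big _ _ _ n) /n; try lia.
rewrite -sumrB /=; apply: eq_bigr => i _; rewrite h; ring.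
Qed.

Lemma ev_scale (R : idomainType) (g : nat -> prodQ R) (a : seq {fraction R}) k P :
  ev g (map (fun q => k * q) a) P = k * ev g a P.
Proof.
rewrite (@ev_lin _ _ a [::] _ k) ?ev_nil ?addr0 // => i.
case: (ltnP i (size a)) => hi; first by rewrite (nth_map 0) // nth_nil addr0.
by rewrite !nth_default ?size_map // mulr0 addr0.
Qed.

Lemma W_lin (R : idomainType) (g : nat -> prodQ R) W (hW : adm g W) (a b : R) w1 w2 :
  W w1 -> W w2 -> W (fun P => a%:F * w1 P + b%:F * w2 P).
Proof.
case: hW => W0 sat cl _ h1 h2.
apply: (sat (fun P => a%:F * w1 P + (b%:F * w2 P + 0))); last first.
  by apply: (cl) => //; apply: (cl).
by apply: pe_pt => P; rewrite addr0.
Qed.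

Lemma W_sc (R : idomainType) (g : nat -> prodQ R) W (hW : adm g W) (a : R) w1 :
  W w1 -> W (fun P => a%:F * w1 P).
Proof.
case: (hW) => W0 sat cl _ h1.
apply: (sat (fun P => a%:F * w1 P + 0%:F * w1 P)); last exact: (W_lin hW a 0 h1 h1).
by apply: pe_pt => P; rewrite tofrac0 mul0r addr0.
Qed.

Lemma W_add (R : idomainType) (g : nat -> prodQ R) W (hW : adm g W) w1 w2 :
  W w1 -> W w2 -> W (fun P => w1 P + w2 P).
Proof.
case: (hW) => W0 sat cl _ h1 h2.
apply: (sat (fun P => 1%:F * w1 P + w2 P)); last exact: cl.
by apply: pe_pt => P; rewrite tofrac1 mul1r.
Qed.

Lemma extend (R : idomainType) (g : nat -> prodQ R) W (hW : adm g W)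
  (hmax : forall W', adm g W' -> sub W W' -> sub W' W) m :
  (forall c (s : R) w, W w -> prod_eq (ev g c) (fun P => w P + s%:F * m P) ->
     forall i, c`_i = 0) -> W m.
Proof.
move=> hyp.
pose W' := fun f => exists (s : R) w, W w /\ prod_eq f (fun P => w P + s%:F * m P).
have aW' : adm g W'.
  case: (hW) => W0 sat cl _; split.
  - exists 0, (fun _ => 0); split => //; apply: pe_pt => P; rewrite tofrac0; ring.
  - move=> f h e [s [w [Ww ew]]]; exists s, w; split => //.
    exact: pe_trans (pe_sym e) ew.
  - move=> a f h [s1 [w1 [Ww1 e1]]] [s2 [w2 [Ww2 e2]]].
    exists (a * s1 + s2), (fun P => a%:F * w1 P + w2 P); split; first exact: cl.
    apply: pe_trans (pe_lin a e1 e2) _; apply: pe_pt => P.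
    rewrite tofracD tofracM; ring.
  - move=> c [s [w [Ww e]]]; exact: hyp e.
apply: (hmax W' aW').
  move=> f Wf; exists 0, f; split => //; apply: pe_pt => P; rewrite tofrac0; ring.
exists 1, (fun _ => 0); split; first by case: hW.
by apply: pe_pt => P; rewrite tofrac1; ring.
Qed.

Lemma decomp (R : idomainType) (g : nat -> prodQ R) W (hW : adm g W)
  (hmax : forall W', adm g W' -> sub W W' -> sub W' W) m :
  exists p : seq {fraction R} * prodQ R, W p.2 /\ prod_eq m (fun P => ev g p.1 P + p.2 P).
Proof.
have [[r [c [w [r0 Ww e]]]]|hn] := pselect (exists (r : R) c w, [/\ r != 0, W w &
    prod_eq (fun P => r%:F * m P) (fun P => ev g c P + w P)]).
  have rF : r%:F != 0 by rewrite tofrac_eq0.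
  pose c' := map (fun q => q / r%:F) c.
  have hc' : forall P, ev g c P = r%:F * ev g c' P.
    move=> P; rewrite -ev_scale -map_comp; apply: ev_ext => i /=.
    case: (ltnP i (size c)) => hi.
      by rewrite (nth_map 0) //= mulrC divfK.
    by rewrite !nth_default ?size_map.
  pose m' := fun P => m P - ev g c' P.
  have Wm' : W m'.
    apply: (extend hW hmax) => d s w2 Ww2 e2 i.
    have : W (ev g (map (fun q => r%:F * q) d)).
      case: (hW) => _ sat _ _.
      apply: (sat (fun P => r%:F * w2 P + s%:F * w P)); last exact: (W_lin hW r s Ww2 Ww).
      move=> P; have := loc_opp (loc_add (loc_mulR r (e2 P)) (loc_mulR s (e P))).
      apply: loc_eq; rewrite ev_scale hc' /m' /=; ring.
    case: (hW) => _ _ _ hint /hint /(_ i).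
    case: (ltnP i (size d)) => hi; last by rewrite [d`_i]nth_default.
    by rewrite (nth_map 0) // => /eqP; rewrite mulf_eq0 (negbTE rF) => /eqP.
  exists (c', m'); split => //; apply: pe_pt => P; rewrite /m' /=; ring.
have Wm : W m.
  apply: (extend hW hmax) => c s w Ww e.
  have [s0|s0] := eqVneq s 0.
    subst s; case: (hW) => _ sat _ hint; apply: hint; apply: (sat w) => //.
    apply: pe_trans _ (pe_sym e); apply: pe_pt => P; rewrite tofrac0; ring.
  case: hn; exists s, c, (fun P => (-1)%:F * w P); split => //; first exact: (W_sc hW (-1) Ww).
  move=> P; have := loc_opp (e P); apply: loc_eq; rewrite tofracN tofrac1; ring.
exists ([::], m); split => //; apply: pe_pt => P /=; rewrite ev_nil; ring.
Qed.


Lemma pe_addL (R : idomainType) (A B w1 w2 : prodQ R) :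
  (forall P, A P = B P) -> prod_eq w1 w2 ->
  prod_eq (fun P => A P + w1 P) (fun P => B P + w2 P).
Proof. by move=> e h P; rewrite e; have := h P; apply: loc_eq; ring. Qed.

Lemma uniq_dec (R : idomainType) (g : nat -> prodQ R) W (hW : adm g W) c c' w w' :
  W w -> W w' -> prod_eq (fun P => ev g c P + w P) (fun P => ev g c' P + w' P) ->
  (forall i, c`_i = c'`_i) /\ prod_eq w w'.
Proof.
move=> Ww Ww' e.
case: (@exists_seq _ (fun i => c`_i - c'`_i) (maxn (size c) (size c'))) => [i hi|d hd].
  by move: hi; rewrite geq_max => /andP [h1 h2]; rewrite !nth_default ?subrr.
case: (hW) => _ sat cl hint.
have Wd : W (ev g d).
  apply: (sat (fun P => (-1)%:F * w P + w' P)); last exact: cl.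
  move=> P; have := loc_opp (e P); apply: loc_eq; rewrite (ev_sub _ _ hd) tofracN tofrac1; ring.
have hc : forall i, c`_i = c'`_i.
  by move=> i; apply/eqP; rewrite -subr_eq0 -hd (hint _ Wd).
split => // P; have := e P; apply: loc_eq; rewrite (ev_ext _ _ hc); ring.
Qed.

Lemma iso_of_indep (R : idomainType) (g : nat -> prodQ R) :
  indep g -> exists phi : sumQ R -> prodQ R, sum_prod_iso phi.
Proof.
move=> hind; have [W [hW hmax]] := zorn_max hind.
pose dec := fun m => proj1_sig (cid (decomp hW hmax m)).
have decP : forall m, W (dec m).2 /\ prod_eq m (fun P => ev g (dec m).1 P + (dec m).2 P).
  by move=> m; exact: (proj2_sig (cid (decomp hW hmax m))).
exists (fun x P => ev g (x.1 :: (dec x.2).1) P + (dec x.2).2 P); split.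
- move=> [q1 m1] [q2 m2] [/= <- e].
  have [u1 e1] := decP m1; have [u2 e2] := decP m2.
  have [hc hw] := uniq_dec hW u1 u2 (pe_trans (pe_sym e1) (pe_trans e e2)).
  by apply: pe_addL hw => P; apply: ev_ext => -[|i] //=.
- move=> [q1 m1] [q2 m2] /=; rewrite /prod_add /=.
  have [u1 e1] := decP m1; have [u2 e2] := decP m2.
  have [u3 e3] := decP (fun P => m1 P + m2 P).
  case: (@exists_seq _ (fun i => (dec m1).1`_i + (dec m2).1`_i)
                   (maxn (size (dec m1).1) (size (dec m2).1))) => [i hi|d hd].
    by move: hi; rewrite geq_max => /andP [h1 h2]; rewrite !nth_default ?addr0.
  have hd' : forall P, ev g d P = ev g (dec m1).1 P + ev g (dec m2).1 P.
    by move=> P; rewrite (@ev_lin _ _ (dec m1).1 (dec m2).1 d 1) ?mul1r // => i; rewrite hd mul1r.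
  have h12 : prod_eq (fun P => m1 P + m2 P)
               (fun P => ev g d P + ((dec m1).2 P + (dec m2).2 P)).
    move=> P; have := loc_add (e1 P) (e2 P); apply: loc_eq; rewrite hd'; ring.
  have [hc hw] := uniq_dec hW (W_add hW u1 u2) u3 (pe_trans (pe_sym h12) e3).
  move=> P; have := loc_opp (hw P); apply: loc_eq.
  rewrite (@ev_lin _ _ (q1 :: (dec m1).1) (q2 :: (dec m2).1) _ 1); last first.
    by case=> [|i] /=; rewrite ?mul1r // -hc hd.
  ring.
- move=> r [q m] /=; rewrite /prod_scale /=.
  have [u1 e1] := decP m; have [u3 e3] := decP (fun P => r%:F * m P).
  have h1 : prod_eq (fun P => r%:F * m P)
      (fun P => ev g (map (fun q => r%:F * q) (dec m).1) P + r%:F * (dec m).2 P).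
    move=> P; have := loc_mulR r (e1 P); apply: loc_eq; rewrite ev_scale; ring.
  have [hc hw] := uniq_dec hW (W_sc hW r u1) u3 (pe_trans (pe_sym h1) e3).
  move=> P; have := loc_opp (hw P); apply: loc_eq.
  rewrite (@ev_ext _ _ (r%:F * q :: (dec (fun P => r%:F * m P)).1)
                       (map (fun q => r%:F * q) (q :: (dec m).1))); last first.
    by case=> [|i] //=; rewrite -hc.
  rewrite ev_scale; ring.
- move=> [q1 m1] [q2 m2] /= e.
  have [u1 e1] := decP m1; have [u2 e2] := decP m2.
  have [hc hw] := uniq_dec hW u1 u2 e.
  split; first exact: (hc 0%N).
  apply: pe_trans e1 (pe_trans _ (pe_sym e2)).
  by apply: pe_addL hw => P; apply: ev_ext => i; apply: (hc i.+1).
- move=> g0; have [u0 e0] := decP g0.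
  pose m := fun P => ev g (behead (dec g0).1) P + (dec g0).2 P.
  exists ((dec g0).1`_0, m) => /=.
  have [u3 e3] := decP m.
  have [hc hw] := uniq_dec hW u0 u3 e3.
  apply: pe_trans (pe_sym e0).
  apply: pe_addL (pe_sym hw) => P; apply: ev_ext => -[|i] //=.
  by rewrite -hc nth_behead.
Qed.


Lemma nz_elem (R : idomainType) : ~ semilocal R ->
  forall P : maxideal R, exists2 x, x \in (P : {pred R}) & x != 0.
Proof.
move=> hns P; apply: contrapT => hn; apply: hns; exists [:: P] => Q; left.
have h0 : forall x, x \in (P : {pred R}) -> x = 0.
  move=> x xP; apply/eqP; apply: contrapT => /negP x0; apply: hn; by exists x.
have PQ : {subset (P : {pred R}) <= (Q : {pred R})}.
  by move=> x /h0 ->; apply: P0.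
have [hQ Q1 _] := mi_max Q; have [_ _ hmax] := mi_max P.
have QP := hmax _ hQ PQ Q1.
case: P PQ QP {h0 hn hmax} => p hp /= PQ QP; apply/esym/maxideal_eq => x.
by apply/idP/idP => [/QP|/PQ].
Qed.

Lemma inf_avoid (T : Type) (h : nat -> T) : injective h ->
  forall (l : list T) N, exists j, (N <= j)%N /\ ~ List.In (h j) l.
Proof.
move=> hi; elim=> [|a l IH] N; first by exists N; split.
have [j1 [hj1 nj1]] := IH N.
have [e|ne] := pselect (h j1 = a); last first.
  by exists j1; split => // -[|//]; move=> /esym.
have [j2 [hj2 nj2]] := IH j1.+1.
exists j2; split; first exact: leq_trans hj1 (ltnW hj2).
move=> [e2|//]; rewrite -e in e2; move: (hi _ _ e2) => e3; subst j2.
by rewrite ltnn in hj2.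
Qed.

Lemma seq_max (R : idomainType) : ~ semilocal R ->
  exists Pk : nat -> maxideal R, injective Pk.
Proof.
move=> hns.
have hl : forall l : list (maxideal R), exists P, ~ List.In P l.
  move=> l; apply: contrapT => hn; apply: hns; exists l => P.
  by apply: contrapT => h; apply: hn; exists P.
pose newP l := proj1_sig (cid (hl l)).
have newPP : forall l, ~ List.In (newP l) l by move=> l; exact: (proj2_sig (cid (hl l))).
pose L := fix L n := if n is n'.+1 then newP (L n') :: L n' else nil.
have inL : forall m n, (m < n)%N -> List.In (newP (L m)) (L n).
  move=> m; elim=> [//|n IH]; rewrite ltnS leq_eqVlt => /orP [/eqP ->|h].
    by left.
  by right; apply: IH.
exists (fun n => newP (L n)) => m n e.
case: (ltngtP m n) => // h.
  by case: (newPP (L n)); rewrite -e; apply: inL.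
by case: (newPP (L m)); rewrite e; apply: inL.
Qed.

Definition kk (i j : nat) : nat := (2 ^ i * j.*2.+1).-1.

Lemma kkS i j : (kk i j).+1 = (2 ^ i * j.*2.+1)%N.
Proof. by rewrite /kk prednK // muln_gt0 expn_gt0. Qed.

Lemma logn_kk i j : logn 2 (kk i j).+1 = i.
Proof.
rewrite kkS lognM ?expn_gt0 // lognX logn_prime // eqxx muln1.
by rewrite logn_coprime ?addn0 // coprime2n /= odd_double.
Qed.

Lemma kk_inj i : injective (kk i).
Proof.
move=> j1 j2 e; have : (kk i j1).+1 = (kk i j2).+1 by rewrite e.
rewrite !kkS => /eqP; rewrite eqn_pmul2l ?expn_gt0 // => /eqP [].
by move/eqP; rewrite -!muln2 eqn_pmul2r // => /eqP.
Qed.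

Lemma fl_cross (F : fieldType) (a b x a' t : F) : b != 0 -> x != 0 -> t != 0 ->
  a / b * x^-1 = a' / t -> a * t = a' * b * x.
Proof.
move=> hb hx ht e.
have : a / b * x^-1 * (t * b * x) = a' / t * (t * b * x) by rewrite e.
have -> : a / b * x^-1 * (t * b * x) = a * t by field; rewrite hb hx.
by move=> ->; field; rewrite ht.
Qed.

Lemma exists_indep (R : idomainType) : dedekind_domain R -> ~ semilocal R ->
  exists g : nat -> prodQ R, indep g.
Proof.
move=> hR hns.
have [Pk Pinj] := seq_max hns.
pose xP (P : maxideal R) := proj1_sig (cid2 (nz_elem hns P)).
have xPP : forall P, xP P \in (P : {pred R}) /\ xP P != 0.
  by move=> P; rewrite /xP; case: cid2.
pose g (i : nat) (P : maxideal R) : {fraction R} :=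
  if pselect (exists k, P = Pk k /\ logn 2 k.+1 = i) then ((xP P)%:F)^-1 else 0.
have gval : forall i k, g i (Pk k) = if logn 2 k.+1 == i then ((xP (Pk k))%:F)^-1 else 0.
  move=> i k; rewrite /g; case: pselect => [h'|hn].
    have [k' [e1 e2]] := h'; have e3 := Pinj _ _ e1.
    have -> : logn 2 k.+1 = i by rewrite e3.
    by rewrite eqxx.
  by case: eqP => // e; case: hn; exists k.
exists g => c h i.
case: (ltnP i (size c)) => hi; last by rewrite nth_default.
apply: contrapT => ci0.
have [a [b [b0 eab]]] := frac_repr c`_i.
have a0 : a != 0 by apply/eqP => ea; apply: ci0; rewrite eab ea tofrac0 mul0r.
have [l hl] := finmax hR a0.
have [j [_ nj]] := @inf_avoid _ (fun j => Pk (kk i j)) (fun j1 j2 e => kk_inj (Pinj _ _ e)) l 0.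
set P := Pk (kk i j) in nj.
have aP : a \notin (P : {pred R}) by apply/negP => /hl.
have := h P; rewrite subr0 /ev (bigD1 (Ordinal hi)) //= big1; last first.
  move=> i' hi'; rewrite /P gval logn_kk.
  have ne : (i == i') = false.
    apply/negP => /eqP e; move/negP: hi'; apply; apply/eqP/val_inj => /=.
    by rewrite -e.
  by rewrite ne mulr0.
rewrite addr0 /P gval logn_kk eqxx -/P eab.
move=> [a' [t [ht e]]].
have [xPin x0] := xPP P.
have e2 : a * t = a' * b * xP P.
  apply/eqP; rewrite -tofrac_eq !tofracM; apply/eqP; apply: fl_cross e.
  - by rewrite tofrac_eq0.
  - by rewrite tofrac_eq0.
  - exact: PnF ht.
move: (Pmul aP ht); rewrite e2; case: (mi_max P) => [[_ Pc] _ _].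
by rewrite -[_ * xP P]addr0 Pc // P0.
Qed.


Theorem mainTheorem10 (R : idomainType) (hR : dedekind_domain R) :
  (forall f : prodQ R, prod_torsion f <-> prod_in_dsum f) /\
  (~ semilocal R -> card_lt R (maxideal R -> R) ->
   exists phi : sumQ R -> prodQ R, sum_prod_iso phi).
Proof.
split; first exact: part1.
move=> hns _; have [g hg] := exists_indep hR hns.
exact: iso_of_indep hg.
Qed.
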